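(* Let $H$ be a fixed graph, $\eta>0$ fixed, and $p=p(n)$. Suppose $n^{v(J)}p^{e(J)}=\omega(1)$ for every induced subgraph $J\subseteq H$ with at least one edge. Let $\mathcal C\subseteq\binom{[n]}{v(H)}$ be a family (depending on $n$, fixed independently of the random graph) with $|\mathcal C|\ge\eta\binom{n}{v(H)}$. Then asymptotically almost surely $\mathbb{G}(n,p)$ contains a copy of $H$ whose vertex set belongs to $\mathcal C$.
   Context: $\mathbb{G}(n,p)$ is the binomial random graph on vertex set $[n]$. *)

(* Defs.v *)
From HB Require Import structures.
From mathcomp Require Import all_boot all_order all_algebra.
From mathcomp Require Import all_classical all_reals all_analysis.
Set Implicit Arguments. Unset Strict Implicit. Unset Printing Implicit Defensive.
Import Order.TTheory GRing.Theory Num.Theory.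
Local Open Scope ring_scope.

(* Graphs on vertex set 'I_n are represented by their edge sets: sets of
   2-element subsets of 'I_n. *)
Definition pairs (n : nat) : {set {set 'I_n}} := [set e : {set 'I_n} | #|e| == 2%N].

Definition is_graph (h : nat) (EH : {set {set 'I_h}}) : Prop := EH \subset pairs h.

Definition induced_edges (h : nat) (EH : {set {set 'I_h}}) (S : {set 'I_h}) : nat :=
  #|[set e in EH | e \subset S]|.

Definition gnp_prob (R : realType) (n : nat) (p : R) (A : pred {set {set 'I_n}}) : R :=
  \sum_(E in powerset (pairs n) | A E) p ^+ #|E| * (1 - p) ^+ (#|pairs n| - #|E|).

Definition has_copy_in (h n : nat) (EH : {set {set 'I_h}}) (C : {set {set 'I_n}})
  (E : {set {set 'I_n}}) : bool :=
  [exists f : {ffun 'I_h -> 'I_n},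
     [&& injectiveb f, [forall e in EH, (f @: e) \in E] & (f @: [set: 'I_h]) \in C]].

(* Main.v *)
Require Import Defs.
Set Implicit Arguments. Unset Strict Implicit. Unset Printing Implicit Defensive.
From HB Require Import structures.
From mathcomp Require Import all_boot all_order all_algebra.
From mathcomp Require Import all_classical all_reals all_analysis.
From mathcomp Require Import ring lra zify.
Import Order.TTheory GRing.Theory Num.Theory.
Import numFieldNormedType.Exports.
Local Open Scope ring_scope.
Import mathcomp.boot.fintype mathcomp.boot.finset.
Section Prob.
Variables (R : realType) (T : finType) (P : {set T}) (p : R).
Definition wt (E : {set T}) : R := p ^+ #|E| * (1 - p) ^+ (#|P| - #|E|).

Lemma prod1 (J : {set T}) (a : R) :
  \prod_i (if i \in J then a else 1) = a ^+ #|J|.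
Proof. by rewrite -big_mkcond prodr_const. Qed.

Lemma prod_two (J K : {set T}) (a b : R) : [disjoint J & K] ->
  \prod_i (if i \in J then a else if i \in K then b else 1) = a ^+ #|J| * b ^+ #|K|.
Proof.
move=> dJK; rewrite -!prod1 -big_split /=; apply: eq_bigr => i _.
case: (boolP (i \in J)) => iJ; last by rewrite mul1r.
by rewrite (disjointFr dJK iJ) mulr1.
Qed.

Lemma sum_sup (B : {set T}) : B \subset P ->
  \sum_(E in powerset P | B \subset E) wt E = p ^+ #|B|.
Proof.
move=> sBP.
have := @bigA_distr R 0 1 *%R +%R T (fun i => if i \in P then p else 0)
   (fun i => if i \in B then 0 else if i \in P then 1 - p else 1).
have -> : \prod_i ((if i \in P then p else 0) +
   (if i \in B then 0 else if i \in P then 1 - p else 1)) = p ^+ #|B|.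
  rewrite -prod1; apply: eq_bigr => i _.
  case: (boolP (i \in B)) => iB; first by rewrite (subsetP sBP _ iB) addr0.
  by case: (i \in P); rewrite ?add0r // addrC subrK.
move=> ->; rewrite big_mkcond /=; apply: eq_bigr => J _.
rewrite powersetE.
case: (boolP (J \subset P)) => sJP /=; case: (boolP (B \subset J)) => sBJ /=.
- have cJ : (#|P| - #|J| = #|P :\: J|)%N by rewrite cardsD (setIidPr sJP).
  rewrite /wt cJ -prod_two; last by rewrite disjoint_subset; apply/subsetP => i iJ; rewrite !inE iJ.
  apply: eq_bigr => i _; case: (boolP (i \in J)) => iJ; first by rewrite (subsetP sJP _ iJ).
  rewrite inE iJ /=; have -> : (i \in B) = false by apply/negbTE; apply: contra iJ; apply: subsetP.
  by [].
- have [i iB iJ] : exists2 i, i \in B & i \notin J.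
    by case/subsetPn: sBJ => i ? ?; exists i.
  by rewrite (bigD1 i) //= (negbTE iJ) iB mul0r.
- have [i iJ iP] : exists2 i, i \in J & i \notin P.
    by case/subsetPn: sJP => i ? ?; exists i.
  by rewrite (bigD1 i) //= iJ (negbTE iP) mul0r.
- have [i iJ iP] : exists2 i, i \in J & i \notin P.
    by case/subsetPn: sJP => i ? ?; exists i.
  by rewrite (bigD1 i) //= iJ (negbTE iP) mul0r.
Qed.
End Prob.
Section Comb.
Variables (R : realType) (h n : nat) (EH : {set {set 'I_h}}) (C : {set {set 'I_n}}) (p : R).
Hypothesis gEH : is_graph EH.
Hypothesis p01 : 0 <= p <= 1.

Definition Af (f : {ffun 'I_h -> 'I_n}) : {set {set 'I_n}} := [set [set f x | x in e] | e : {set 'I_h} in EH].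
Definition FF : {set {ffun 'I_h -> 'I_n}} :=
  [set f : {ffun 'I_h -> 'I_n} | injectiveb f && (f @: setT \in C)].
Definition Ind (f : {ffun 'I_h -> 'I_n}) (E : {set {set 'I_n}}) : R := (Af f \subset E)%:R.
Definition Ex (g : {set {set 'I_n}} -> R) : R :=
  \sum_(E in powerset (pairs n)) wt (pairs n) p E * g E.

Lemma Af_sub (f : {ffun 'I_h -> 'I_n}) : injective f -> Af f \subset pairs n.
Proof.
move=> injf; apply/subsetP => a /imsetP [e eE ->].
by rewrite inE card_imset //; have := subsetP gEH _ eE; rewrite inE.
Qed.

Lemma Af_card (f : {ffun 'I_h -> 'I_n}) : injective f -> #|Af f| = #|EH|.
Proof. by move=> injf; rewrite card_imset //; apply: imset_inj. Qed.

Lemma Ex_sup (B : {set {set 'I_n}}) : B \subset pairs n -> Ex (fun E => (B \subset E)%:R) = p ^+ #|B|.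
Proof.
move=> sB; rewrite -(sum_sup p sB) big_mkcondr /=; apply: eq_bigr => E _.
by case: (B \subset E); rewrite ?mulr1 ?mulr0.
Qed.

Lemma Ex1 : Ex (fun _ => 1) = 1.
Proof.
transitivity (Ex (fun E => (set0 \subset E)%:R)); last by rewrite Ex_sup ?sub0set // cards0 expr0.
by rewrite /Ex; apply: eq_bigr => E _; rewrite sub0set.
Qed.

Lemma Ex_ext a b : (forall E, a E = b E) -> Ex a = Ex b.
Proof. by move=> eab; apply: eq_bigr => E _; rewrite eab. Qed.

Lemma ExD a b : Ex (fun E => a E + b E) = Ex a + Ex b.
Proof. by rewrite /Ex -big_split; apply: eq_bigr => E _; rewrite mulrDr. Qed.

Lemma ExN a : Ex (fun E => - a E) = - Ex a.
Proof. by rewrite /Ex -sumrN; apply: eq_bigr => E _; rewrite mulrN. Qed.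

Lemma ExZ c a : Ex (fun E => c * a E) = c * Ex a.
Proof. by rewrite /Ex mulr_sumr; apply: eq_bigr => E _; rewrite mulrCA. Qed.

Lemma Ex_sum (I : finType) (Q : pred I) (a : I -> {set {set 'I_n}} -> R) :
  Ex (fun E => \sum_(i | Q i) a i E) = \sum_(i | Q i) Ex (a i).
Proof.
rewrite /Ex; under eq_bigr => E _ do rewrite mulr_sumr.
by rewrite exchange_big.
Qed.

Definition qq := p ^+ #|EH|.

Lemma Ex_Ind (f : {ffun 'I_h -> 'I_n}) : injective f -> Ex (Ind f) = qq.
Proof. by move=> injf; rewrite /Ind Ex_sup ?Af_sub // Af_card. Qed.

Lemma cov (f g : {ffun 'I_h -> 'I_n}) : injective f -> injective g ->
  Ex (fun E => (Ind f E - qq) * (Ind g E - qq)) = p ^+ #|Af f :|: Af g| - qq ^+ 2.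
Proof.
move=> injf injg.
rewrite (@Ex_ext _ (fun E => ((Af f :|: Af g) \subset E)%:R + (- (qq * Ind g E) +
   (- (qq * Ind f E) + qq ^+ 2 * 1)))); last first.
  move=> E; rewrite subUset.
  have -> : ((Af f \subset E) && (Af g \subset E))%:R = Ind f E * Ind g E :> R.
    by rewrite /Ind -natrM mulnb.
  by move: (Ind f E) (Ind g E) qq => x y z; ring.
rewrite ExD ExD ExD ExN ExN ExZ (ExZ qq (Ind f)) (ExZ (qq ^+ 2) (fun _ => 1)).
rewrite (Ex_Ind injf) (Ex_Ind injg) Ex1.
have sU : Af f :|: Af g \subset pairs n by rewrite subUset (Af_sub injf) (Af_sub injg).
by rewrite (Ex_sup sU) mulr1 -expr2 addNr addr0.
Qed.

Definition cnt (f g : {ffun 'I_h -> 'I_n}) := #|[set j | g j \in f @: setT]|.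

Lemma kI_le (f g : {ffun 'I_h -> 'I_n}) : injective f ->
  (#|Af f :&: Af g| <= induced_edges EH (f @^-1: (g @: setT)))%N.
Proof.
move=> injf; rewrite /induced_edges.
apply: (leq_trans _ (leq_imset_card (fun e : {set 'I_h} => f @: e) _)).
apply: subset_leq_card; apply/subsetP => a; rewrite inE => /andP [].
move=> /imsetP [e eE ->] /imsetP [e' e'E eq].
apply/imsetP; exists e => //; rewrite inE eE /=.
apply/subsetP => x xe; rewrite inE.
have : f x \in [set f x | x in e] by apply: imset_f.
rewrite eq => /imsetP [y _ ->]; exact: imset_f.
Qed.

Lemma S_le (f g : {ffun 'I_h -> 'I_n}) : injective f ->
  (#|f @^-1: (g @: setT)| <= cnt f g)%N.
Proof.
move=> injf; rewrite -(card_imset _ injf) /cnt.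
apply: (leq_trans _ (leq_imset_card g _)); apply: subset_leq_card.
apply/subsetP => y /imsetP [x]; rewrite inE => /imsetP [j _ eq] ->.
rewrite eq; apply: imset_f; rewrite inE -eq; exact: imset_f.
Qed.

Lemma term_bound (f g : {ffun 'I_h -> 'I_n}) (M : R) :
  injective f -> injective g -> 0 <= M -> 1 <= n%:R :> R ->
  (forall S : {set 'I_h}, (0 < induced_edges EH S)%N ->
     1 <= n%:R ^+ #|S| * p ^+ induced_edges EH S * M) ->
  p ^+ #|Af f :|: Af g| - qq ^+ 2 <= qq ^+ 2 * M * n%:R ^+ cnt f g.
Proof.
move=> injf injg M0 n1 HM.
case/andP: p01 => p0 p1.
have q2 : 0 <= qq ^+ 2 by rewrite exprn_ge0 // exprn_ge0.
have hU : (#|Af f :|: Af g| + #|Af f :&: Af g| = #|EH| + #|EH|)%N.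
  rewrite cardsU !Af_card // subnK //.
  apply: (leq_trans (subset_leq_card (subsetIl _ _))); rewrite Af_card //; exact: leq_addr.
have eq2 : qq ^+ 2 = p ^+ #|Af f :|: Af g| * p ^+ #|Af f :&: Af g|.
  by rewrite -exprD hU exprD expr2.
case: (posnP #|Af f :&: Af g|) => [I0 | Ipos].
  move: eq2; rewrite I0 expr0 mulr1 => <-; rewrite subrr.
  by rewrite mulr_ge0 ?exprn_ge0 // ?ler0n // mulr_ge0.
set S := f @^-1: (g @: setT).
have kI := kI_le g injf; have sS := S_le g injf.
have HS := HM S (leq_trans Ipos kI).
have H1 : p ^+ #|Af f :|: Af g| <= qq ^+ 2 * M * n%:R ^+ cnt f g.
  apply: (le_trans (y := p ^+ #|Af f :|: Af g| * (n%:R ^+ #|S| * p ^+ induced_edges EH S * M))).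
    by rewrite -{1}[p ^+ _]mulr1 ler_wpM2l ?exprn_ge0.
  rewrite eq2 -!mulrA ler_wpM2l ?exprn_ge0 // [M * _]mulrC mulrCA.
  have a1 : n%:R ^+ #|S| <= n%:R ^+ cnt f g :> R := ler_weXn2l n1 sS.
  have a2 : p ^+ induced_edges EH S <= p ^+ #|Af f :&: Af g| := ler_wiXn2l p0 p1 kI.
  apply: ler_pM => //; first by rewrite exprn_ge0 // (le_trans ler01 n1).
  - by rewrite mulr_ge0 ?exprn_ge0.
  by apply: ler_wpM2r.
by rewrite lerBlDr (le_trans H1) // lerDl.
Qed.

Lemma sum_cnt_nat (f : {ffun 'I_h -> 'I_n}) :
  (\sum_(g : {ffun 'I_h -> 'I_n}) n ^ cnt f g <= (h.+1 * n) ^ h)%N.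
Proof.
set A := f @: setT.
have e1 : forall g : {ffun 'I_h -> 'I_n},
    (n ^ cnt f g = \prod_j (if g j \in A then n else 1))%N.
  move=> g; rewrite /cnt -prod_nat_const big_mkcond /=.
  by apply: eq_bigr => j _; rewrite inE.
rewrite (eq_bigr _ (fun g _ => e1 g)).
rewrite -(bigA_distr_bigA (fun (j : 'I_h) (x : 'I_n) => if x \in A then n else 1%N)) /=.
have -> : ((h.+1 * n) ^ h = \prod_(j : 'I_h) (h.+1 * n))%N by rewrite prod_nat_const card_ord.
apply: leq_prod => j _.
rewrite (bigID (mem A)) /=.
rewrite (eq_bigr (fun _ => n)); last by move=> x ->.
rewrite [X in (_ + X)%N](eq_bigr (fun _ => 1%N)); last by move=> x /negbTE ->.
rewrite !sum_nat_const muln1 mulSn addnC; apply: leq_add.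
  by apply: (leq_trans (max_card _)); rewrite card_ord.
by rewrite leq_mul2r (leq_trans (leq_imset_card _ _)) ?orbT // cardsT card_ord.
Qed.

Definition X (E : {set {set 'I_n}}) : R := \sum_(f in FF) Ind f E.

Lemma FF_inj f : f \in FF -> injective f.
Proof. by rewrite inE => /andP [/injectiveP]. Qed.

Lemma X0 E : ~~ has_copy_in EH C E -> X E = 0.
Proof.
move=> nh; apply: big1 => f fF; rewrite /Ind.
case: (boolP (Af f \subset E)) => // sE; case/negP: nh.
apply/existsP; exists f; move: fF; rewrite inE => /andP [fi fC]; rewrite fi fC andbT /=.
apply/forallP => e; apply/implyP => eE; apply: (subsetP sE).
by apply/imsetP; exists e.
Qed.

Lemma wt_ge0 E : 0 <= wt (pairs n) p E.
Proof. by case/andP: p01 => p0 p1; rewrite mulr_ge0 ?exprn_ge0 // subr_ge0. Qed.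

Lemma var_eq :
  Ex (fun E => (X E - #|FF|%:R * qq) ^+ 2) =
  \sum_(f in FF) \sum_(g in FF) (p ^+ #|Af f :|: Af g| - qq ^+ 2).
Proof.
rewrite (@Ex_ext _ (fun E => \sum_(f in FF) \sum_(g in FF) (Ind f E - qq) * (Ind g E - qq))).
  rewrite (Ex_sum (fun f => f \in FF) (fun f E => \sum_(g in FF) (Ind f E - qq) * (Ind g E - qq))).
  apply: eq_bigr => f fF.
  rewrite (Ex_sum (fun g => g \in FF) (fun g E => (Ind f E - qq) * (Ind g E - qq))).
  apply: eq_bigr => g gF.
  by rewrite (cov (FF_inj fF) (FF_inj gF)).
move=> E; rewrite /X.
have -> : #|FF|%:R * qq = \sum_(f in FF) qq by rewrite sumr_const mulr_natl.
rewrite -sumrB expr2 mulr_suml; apply: eq_bigr => f _.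
by rewrite mulr_sumr.
Qed.

Lemma bad_bound (M : R) :
  0 <= M -> 1 <= n%:R :> R ->
  (forall S : {set 'I_h}, (0 < induced_edges EH S)%N ->
     1 <= n%:R ^+ #|S| * p ^+ induced_edges EH S * M) ->
  0 < qq -> (0 < #|FF|)%N ->
  @gnp_prob R n p (fun E => ~~ has_copy_in EH C E) <=
    M * ((h.+1 * n) ^ h)%:R / #|FF|%:R.
Proof.
move=> M0 n1 HM q0 F0.
set mu := #|FF|%:R * qq.
have mu0 : 0 < mu by rewrite mulr_gt0 // ltr0n.
apply: (le_trans (y := Ex (fun E => (X E - mu) ^+ 2) / mu ^+ 2)).
  rewrite /gnp_prob /Ex big_mkcondr /= mulr_suml; apply: ler_sum => E _.
  rewrite -/(wt (pairs n) p E) -mulrA.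
  case: (boolP (has_copy_in EH C E)) => hE /=.
    by rewrite mulr_ge0 ?wt_ge0 // divr_ge0 ?sqr_ge0 // exprn_ge0 // ltW.
  by rewrite X0 // sub0r sqrrN divff ?mulr1 // expf_neq0 // gt_eqF.
rewrite var_eq.
set K := ((h.+1 * n) ^ h)%N.
have q2M : 0 <= qq ^+ 2 * M by rewrite mulr_ge0 // exprn_ge0 // ltW.
have Hs : \sum_(f in FF) \sum_(g in FF) (p ^+ #|Af f :|: Af g| - qq ^+ 2)
    <= #|FF|%:R * (qq ^+ 2 * M * K%:R).
  apply: (le_trans (y := \sum_(f in FF) (qq ^+ 2 * M * K%:R))); last first.
    by rewrite sumr_const mulr_natl.
  apply: ler_sum => f fF.
  apply: (le_trans (y := \sum_(g in FF) qq ^+ 2 * M * n%:R ^+ cnt f g)).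
    by apply: ler_sum => g gF; apply: term_bound => //; apply: FF_inj.
  apply: (le_trans (y := \sum_g qq ^+ 2 * M * n%:R ^+ cnt f g)).
    rewrite [X in _ <= X](bigID (mem FF)) /= lerDl; apply: sumr_ge0 => g _.
    by rewrite mulr_ge0 // exprn_ge0 // ler0n.
  rewrite -mulr_sumr ler_wpM2l //.
  have -> : \sum_g n%:R ^+ cnt f g = (\sum_g n ^ cnt f g)%:R :> R.
    by rewrite natr_sum; apply: eq_bigr => g _; rewrite natrX.
  by rewrite ler_nat; exact: sum_cnt_nat.
apply: (le_trans (ler_wpM2r _ Hs)); first by rewrite invr_ge0 exprn_ge0 // ltW.
have Fn0 : #|FF|%:R != 0 :> R by rewrite pnatr_eq0 -lt0n.
have qn0 : qq != 0 by rewrite gt_eqF.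
rewrite le_eqVlt; apply/orP; left; apply/eqP; rewrite /mu.
move: (#|FF|%:R : R) qq (K%:R : R) Fn0 qn0 => a b c an0 bn0.
by field; rewrite an0 bn0.
Qed.

Lemma gnp_compl : @gnp_prob R n p (has_copy_in EH C) =
  1 - @gnp_prob R n p (fun E => ~~ has_copy_in EH C E).
Proof.
have e : \sum_(E in powerset (pairs n)) wt (pairs n) p E = 1.
  by rewrite -Ex1 /Ex; apply: eq_bigr => E _; rewrite mulr1.
rewrite -e /gnp_prob (bigID (has_copy_in EH C) (fun E => E \in powerset (pairs n))) /=.
by rewrite addrK.
Qed.

Lemma card_FF : (forall c, c \in C -> #|c| = h) -> (#|C| <= #|FF|)%N.
Proof.
move=> Hc.
apply: (leq_trans _ (leq_imset_card (fun f : {ffun 'I_h -> 'I_n} => f @: setT) FF)).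
apply: subset_leq_card; apply/subsetP => c cC.
have hc := Hc c cC.
pose f : {ffun 'I_h -> 'I_n} := [ffun j => enum_val (cast_ord (esym hc) j)].
have imf : f @: setT = c.
  apply/setP => x; apply/imsetP/idP.
    by case=> j _ ->; rewrite ffunE enum_valP.
  move=> xc; exists (cast_ord hc (enum_rank_in xc x)) => //.
  by rewrite ffunE cast_ordK enum_rankK_in.
apply/imsetP; exists f => //; rewrite inE imf cC andbT.
apply/injectiveP => i j; rewrite !ffunE => /enum_val_inj; exact: cast_ord_inj.
Qed.

End Comb.
Lemma ffact_lb (m n : nat) : ((n.+1 - m) ^ m <= n ^_ m)%N.
Proof.
elim: m n => [|m IH] n; first by rewrite ffactn0.
case: n => [|n]; first by rewrite subSS sub0n exp0n.
rewrite ffactSS subSS expnS; apply: leq_mul; last exact: IH.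
exact: leq_subr.
Qed.

Lemma pow_le_bin (n k : nat) : (2 * k <= n)%N -> (n ^ k <= 2 ^ k * k`! * 'C(n, k))%N.
Proof.
move=> hn; rewrite -mulnA [(k`! * _)%N]mulnC bin_ffact.
apply: (leq_trans _ (leq_mul (leqnn _) (ffact_lb k n))).
rewrite -expnMn; case: k hn => [|k] hn; first by rewrite !expn0.
rewrite leq_exp2r //.
lia.
Qed.
Local Open Scope classical_set_scope.

Lemma inv_cvg0 (R : realType) (x : nat -> R) :
  x @ \oo --> +oo -> (fun n => (x n)^-1) @ \oo --> (0 : R).
Proof.
move=> hx.
have pos : \forall n \near \oo, 0 < x n by move/cvgryPgt: hx; apply.
apply/(cvgrVy (f := fun n => (x n)^-1)).
  by near=> n; rewrite invr_gt0; near: n.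
suff -> : unstable.inv_fun (fun n : nat => (x n)^-1) = x by [].
by apply: boolp.funext => n; rewrite /unstable.inv_fun invrK.
Unshelve. all: end_near.
Qed.

Lemma sum_cvg0 (R : realType) (I : finType) (P : pred I) (x : I -> nat -> R) :
  (forall i, P i -> x i @ \oo --> (0 : R)) ->
  (fun n => \sum_(i | P i) x i n) @ \oo --> (0 : R).
Proof.
move=> hx.
have := @cvg_big R I +%R 0 P add_continuous nat \oo (index_enum I) x (fun=> 0) _ hx.
by rewrite big1 // => H; apply: H; apply: filter_class.
Qed.
Local Open Scope ring_scope.
Theorem corollaryA2 (R : realType) (h : nat) (EH : {set {set 'I_h}})
  (eta : R) (p : nat -> R) (C : forall n : nat, {set {set 'I_n}}) :
  is_graph EH ->
  0 < eta ->
  (forall n, 0 <= p n <= 1) ->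
  (forall S : {set 'I_h}, (0 < induced_edges EH S)%N ->
     (fun n : nat => (n%:R : R) ^+ #|S| * p n ^+ induced_edges EH S) @ \oo --> +oo) ->
  (forall n, forall c, c \in C n -> #|c| = h) ->
  (forall n, eta * ('C(n, h))%:R <= (#|C n|)%:R) ->
  (fun n : nat => @gnp_prob R n (p n) (has_copy_in EH (C n))) @ \oo --> (1 : R).
Proof.
move=> gEH eta0 p01 Hinf Hcard HC.
set Pb := fun n => @gnp_prob R n (p n) (fun E => ~~ has_copy_in EH (C n) E).
have -> : (fun n => @gnp_prob R n (p n) (has_copy_in EH (C n))) = (fun n => 1 - Pb n).
  by apply: boolp.funext => n; rewrite gnp_compl.
rewrite -[X in _ --> X]subr0; apply: cvgB; first exact: cvg_cst.
set x := fun (S : {set 'I_h}) (n : nat) => (n%:R : R) ^+ #|S| * p n ^+ induced_edges EH S.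
set Mn := fun n => \sum_(S | (0 < induced_edges EH S)%N) (x S n)^-1.
have Mcvg : Mn @ \oo --> (0 : R) := sum_cvg0 (fun S hS => inv_cvg0 (Hinf S hS)).
set c := (h.+1 ^ h * (2 ^ h * h`!))%N.
set B := c%:R / eta.
apply: (@squeeze_cvgr _ _ _ _ (fun=> 0) (fun n => Mn n * B)); last 2 first.
- exact: cvg_cst.
- by rewrite -(mul0r B); apply: cvgMl.
have hposN : \forall n \near \oo, forall S, (0 < induced_edges EH S)%N -> 0 < x S n.
  apply: filter_forall => S.
  case: (posnP (induced_edges EH S)) => [e0|hS].
    by apply: nearW.
  by have := Hinf S hS; move/cvgryPgt => /(_ 0); apply: filterS => n ? _.
apply: filterS (filterI hposN (nbhs_infty_ge (2 * h).+1)) => n [hpos hn].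
have n1 : 1 <= n%:R :> R by rewrite ler1n; apply: leq_trans hn.
have hnh : (h <= n)%N by apply: leq_trans hn; lia.
apply/andP; split.
  by apply: sumr_ge0 => E _; apply: wt_ge0.
have Mn0 : 0 <= Mn n by apply: sumr_ge0 => S hS; rewrite invr_ge0 ltW // hpos.
have HM : forall S : {set 'I_h}, (0 < induced_edges EH S)%N ->
    1 <= n%:R ^+ #|S| * p n ^+ induced_edges EH S * Mn n.
  move=> S hS; rewrite -/(x S n).
  have xS := hpos S hS.
  rewrite -(mulfV (lt0r_neq0 xS)); apply: ler_wpM2l; first exact: ltW xS.
  rewrite /Mn (bigD1 S) //= lerDl; apply: sumr_ge0 => T /andP [hT _].
  by rewrite invr_ge0 ltW // hpos.
have q0 : 0 < qq EH (p n).
  rewrite /qq; case: (posnP #|EH|) => [->|kpos]; first by rewrite expr0 ltr01.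
  have eT : induced_edges EH setT = #|EH|.
    rewrite /induced_edges (_ : [set e in EH | e \subset setT] = EH) //.
    by apply/mathcomp.boot.finset.setP => e; rewrite inE subsetT andbT.
  have := hpos setT; rewrite /x eT => /(_ kpos) xT.
  rewrite lt_def exprn_ge0 ?andbT; last by case/andP: (p01 n).
  by apply/eqP => e0; move: xT; rewrite e0 mulr0 ltxx.
have Cpos : (0 < 'C(n, h))%N by rewrite bin_gt0.
have FFge : eta * ('C(n, h))%:R <= (#|FF h (C n)|)%:R.
  by apply: (le_trans (HC n)); rewrite ler_nat; apply: card_FF; apply: Hcard.
have F0 : (0 < #|FF h (C n)|)%N.
  by rewrite -(ltr0n R); apply: lt_le_trans FFge; rewrite mulr_gt0 // ltr0n.
apply: (le_trans (bad_bound gEH (p01 n) Mn0 n1 HM q0 F0)).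
rewrite -mulrA ler_wpM2l // ler_pdivrMr ?ltr0n //.
apply: (le_trans (y := c%:R * ('C(n, h))%:R)).
  rewrite -natrM ler_nat expnMn /c -mulnA leq_mul2l; apply/orP; right.
  by apply: pow_le_bin; apply: ltnW.
apply: (le_trans (y := B * (eta * ('C(n, h))%:R))).
  by rewrite /B mulrA divfK ?gt_eqF.
by rewrite ler_wpM2l // /B divr_ge0 ?ler0n // ltW.
Qed.
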